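(* There is a constant $C>0$ such that for every 1-2-metric on $n\ge2$ points and every $\alpha>0$, the greedy-routing network creation game on it with edge price $\alpha$ has a $(C\max\{1,\log n\})$-approximate Nash equilibrium.
   Context: A 1-2-metric is a finite metric space $(\mathcal{P},d)$ with $d(u,v)\in\{1,2\}$ for all distinct $u,v$. Game: agents are the points of $\mathcal{P}$; agent $u$'s strategy is $S_u\subseteq\mathcal{P}\setminus\{u\}$; a profile $\mathbf{s}$ defines the directed network with arcs $(u,v)$, $v\in S_u$, of length $d(u,v)$; $(S'_u,\mathbf{s}_{-u})$ is $\mathbf{s}$ with $S_u$ replaced by $S'_u$. A greedy path from $u$ to $v$ is a directed path $u=x_1,\dots,x_j=v$ of arcs with $d(x_i,v)>d(x_{i+1},v)$ for all $i$. $\mathrm{stretch}(u,v)$ is the minimum length of a greedy path from $u$ to $v$ divided by $d(u,v)$, or a fixed sufficiently large penalty constant $Z$ if none exists. Cost: $c_u(\mathbf{s})=\sum_{v\ne u}\mathrm{stretch}(u,v)+\alpha|S_u|$. For $\beta\ge1$, a $\beta$-approximate Nash equilibrium is a profile $\mathbf{s}$ with $c_u(S'_u,\mathbf{s}_{-u})\ge c_u(\mathbf{s})/\beta$ for every agent $u$ and every $S'_u\subseteq\mathcal{P}\setminus\{u\}$. *)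

(* Defs.v *)
From HB Require Import structures.
From mathcomp Require Import all_boot all_order all_algebra.
From mathcomp Require Import boolp classical_sets reals exp.
Set Implicit Arguments. Unset Strict Implicit. Unset Printing Implicit Defensive.
Import Order.TTheory GRing.Theory Num.Theory.
Local Open Scope ring_scope.

Section GreedyGame.
Variable T : finType.

Definition is_12metric (d : T -> T -> nat) : Prop :=
  [/\ (forall u v, d u v = 0%N <-> u = v),
      (forall u v, d u v = d v u),
      (forall u v w, (d u w <= d u v + d v w)%N) &
      (forall u v, u <> v -> d u v = 1%N \/ d u v = 2%N)].

(* A strategy profile: agent u buys arcs to the points of s u. *)
Definition profile := T -> {set T}.

Definition valid_profile (s : profile) : Prop := forall u, u \notin s u.

Definition update (s : profile) (u : T) (S' : {set T}) : profile :=
  fun w => if w == u then S' else s w.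

(* p is the sequence x_2, ..., x_j of a greedy path u = x_1, ..., x_j = v. *)
Definition greedy_path (d : T -> T -> nat) (s : profile) (u v : T) (p : seq T) : bool :=
  path (fun x y => (y \in s x) && (d y v < d x v)%N) u p && (last u p == v).

Definition path_length (d : T -> T -> nat) (u : T) (p : seq T) : nat :=
  sumn (pairmap d u p).

Definition has_greedy_len (d : T -> T -> nat) (s : profile) (u v : T) (k : nat) : bool :=
  `[< exists p : seq T, greedy_path d s u v p /\ path_length d u p = k >].

Variable R : realType.

Definition stretch (d : T -> T -> nat) (Z : R) (s : profile) (u v : T) : R :=
  match pselect (exists k, has_greedy_len d s u v k) with
  | left H => (ex_minn H)%:R / (d u v)%:R
  | right _ => Z
  end.

Definition cost (d : T -> T -> nat) (Z alpha : R) (s : profile) (u : T) : R :=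
  \sum_(v | v != u) stretch d Z s u v + alpha * #|s u|%:R.

Definition approx_NE (d : T -> T -> nat) (Z alpha beta : R) (s : profile) : Prop :=
  valid_profile s /\
  forall (u : T) (S' : {set T}), u \notin S' ->
    cost d Z alpha s u / beta <= cost d Z alpha (update s u S') u.

End GreedyGame.

(* Main.v *)
Require Import Defs.
From HB Require Import structures.
From mathcomp Require Import all_boot all_order all_algebra.
From mathcomp Require Import boolp classical_sets reals exp.
From mathcomp Require Import lra.
Set Implicit Arguments. Unset Strict Implicit.
Import Order.TTheory GRing.Theory Num.Theory.
Local Open Scope ring_scope.

Section Aux.
Variable T : finType.
Variable d : T -> T -> nat.
Hypothesis Hd : is_12metric d.

Definition coverb (u : T) (S : {set T}) : bool :=
  [forall v, (v != u) ==> ((v \in S) ||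
     [exists w, (w \in S) && (d w v == 1)%N && (d u v == 2)%N])].

Definition sopt : profile T := fun u =>
  [arg min_(S < [set~ u] | coverb u S && (u \notin S)) #|S|].

Lemma d0 u v : u != v -> (1 <= d u v)%N.
Proof.
case: Hd => H0 _ _ _ neq; rewrite lt0n; apply/negP => /eqP /H0 E.
by rewrite E eqxx in neq.
Qed.

Lemma d2 u v : (d u v <= 2)%N.
Proof.
case: Hd => H0 _ _ H12; case: (eqVneq u v) => [->|/eqP ne].
  by rewrite (proj2 (H0 v v) erefl).
by case: (H12 _ _ ne) => ->.
Qed.

Lemma sopt_prop u : coverb u (sopt u) && (u \notin sopt u).
Proof.
rewrite /sopt; case: arg_minnP => //.
apply/andP; split; last by rewrite !inE eqxx.
apply/forallP => v; apply/implyP => nv; by rewrite !inE nv.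
Qed.

Lemma sopt_min u S : coverb u S -> u \notin S -> (#|sopt u| <= #|S|)%N.
Proof.
move=> c nS; rewrite /sopt; case: arg_minnP.
  apply/andP; split; last by rewrite !inE eqxx.
  apply/forallP => v; apply/implyP => nv; by rewrite !inE nv.
move=> S0 _ H; apply: H; by rewrite c nS.
Qed.

Lemma sopt_N1 w v : d w v = 1%N -> v \in sopt w.
Proof.
move=> E; have /andP [c _] := sopt_prop w.
have nv : v != w.
  apply/eqP => ev; subst; case: Hd => H0 _ _ _.
  by rewrite (proj2 (H0 w w) erefl) in E.
move/forallP: c => /(_ v); rewrite nv /= => /orP [//|/existsP [x /andP [_ /eqP]]].
by rewrite E.
Qed.

Lemma greedy_cover (s : profile T) u v p :
  u != v -> greedy_path d s u v p ->
  (v \in s u) \/ exists w, w \in s u /\ d w v = 1%N /\ d u v = 2%N.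
Proof.
move=> nuv; case: p => [|x p] /andP [Hp /eqP Hl].
  by rewrite /= in Hl; rewrite Hl eqxx in nuv.
move: Hp => /= /andP [/andP [xs lt] _].
case: (eqVneq x v) => [<-|nxv]; first by left.
right; exists x; split => //.
have h1 := d0 nxv; have h2 := d2 u v.
have e1 : d x v = 1%N by apply/eqP; rewrite eqn_leq h1 andbT -ltnS (leq_trans lt h2).
split => //; apply/eqP; rewrite eqn_leq h2 /=; by rewrite -e1.
Qed.

Lemma path_ex (s : profile T) u v :
  (forall w, w != u -> forall x, d w x = 1%N -> x \in s w) ->
  u \notin s u -> u != v ->
  ((v \in s u) \/ exists w, w \in s u /\ d w v = 1%N /\ d u v = 2%N) ->
  exists p, greedy_path d s u v p /\ (path_length d u p <= 3)%N.
Proof.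
move=> good nu nuv [vin|[w [win [e1 e2]]]].
  exists [:: v]; rewrite /greedy_path /path_length /= vin eqxx /=.
  have := d0 nuv; case: Hd => H0 _ _ _.
  rewrite (proj2 (H0 v v) erefl) addn0 => ->; split => //.
  by apply: leq_trans (d2 u v) _.
have nwu : w != u by apply/eqP => ewu; subst; rewrite win in nu.
have vw := good w nwu v e1.
exists [:: w; v]; rewrite /greedy_path /path_length /= win vw eqxx e1 e2 /=.
case: Hd => H0 _ _ _; rewrite (proj2 (H0 v v) erefl) /=; split => //.
by rewrite addn0 addn1 ltnS d2.
Qed.

Variable R : realType.

Lemma stretch_ge0 (Z : R) s u v : 0 <= Z -> 0 <= stretch d Z s u v.
Proof.
move=> Z0; rewrite /stretch; case: pselect => // H.
by apply: divr_ge0; apply: ler0n.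
Qed.

Lemma stretch_up (Z : R) s u v p : u != v -> greedy_path d s u v p ->
  (path_length d u p <= 3)%N -> stretch d Z s u v <= 3.
Proof.
move=> nuv gp pl; rewrite /stretch; case: pselect => [H|nH]; last first.
  exfalso; apply: nH; exists (path_length d u p); apply/asboolP; by exists p.
case: ex_minnP => m _ Hmin.
have hm : (m <= 3)%N.
  apply: leq_trans (Hmin _ _) pl; apply/asboolP; by exists p.
have hd := d0 nuv.
have hd' : (1 : R) <= (d u v)%:R by rewrite ler1n.
have hm' : (m%:R : R) <= 3 by rewrite (ler_nat R m 3).
rewrite ler_pdivrMr; last by lra.
have : (0 : R) <= m%:R by apply: ler0n.
nra.
Qed.

Lemma stretch_low (Z : R) s u v p : u != v -> greedy_path d s u v p ->
  1 / 2 <= stretch d Z s u v.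
Proof.
move=> nuv gp; rewrite /stretch; case: pselect => [H|nH]; last first.
  exfalso; apply: nH; exists (path_length d u p); apply/asboolP; by exists p.
case: ex_minnP => m /asboolP [q [gq <-]] _.
have hm : (1 <= path_length d u q)%N.
  case: q gq => [|x q] /andP [Hp /eqP Hl].
    by rewrite /= in Hl; rewrite Hl eqxx in nuv.
  move: Hp => /= /andP [/andP [_ lt] _].
  have nux : u != x by apply/eqP => E; subst; rewrite ltnn in lt.
  rewrite /path_length /=; exact: leq_trans (d0 nux) (leq_addr _ _).
have hd := d0 nuv; have hd2 := d2 u v.
have hd' : (1 : R) <= (d u v)%:R by rewrite ler1n.
have hd2' : ((d u v)%:R : R) <= 2 by rewrite (ler_nat R _ 2).
have hm' : (1 : R) <= (path_length d u q)%:R by rewrite ler1n.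
rewrite ler_pdivlMr; last by lra.
lra.
Qed.

End Aux.

Theorem theorem2p14 (R : realType) :
  exists C : R, 0 < C /\
  forall (T : finType) (d : T -> T -> nat),
    is_12metric d -> (2 <= #|T|)%N ->
    forall alpha : R, 0 < alpha ->
    exists Z0 : R, forall Z : R, Z0 <= Z ->
      exists s : profile T,
        approx_NE d Z alpha (C * Num.max 1 (ln (#|T|%:R : R))) s.
Proof.
exists 6; split; first by lra.
move=> T d Hd _ alpha Ha.
exists (3 *+ #|T| + alpha * #|T|%:R) => Z HZ.
have Z0 : 0 <= Z.
  apply: le_trans HZ; apply: addr_ge0; first by rewrite mulrn_wge0.
  apply: mulr_ge0; [lra | exact: ler0n].
exists (sopt d); split.
  by move=> u; have /andP [_ ->] := sopt_prop d u.
move=> u S' nS.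
set beta := (6 * Num.max 1 _).
have hb : 6 <= beta.
  rewrite /beta; have : 1 <= Num.max 1 (ln (#|T|%:R : R)) by rewrite le_max lexx.
  move=> h; rewrite -[X in X <= _]mulr1; apply: ler_wpM2l => //; lra.
have good : forall w, w != u -> forall x, d w x = 1%N -> x \in sopt d w.
  move=> w _ x e; exact: (sopt_N1 Hd e).
have up : forall v, v != u -> stretch d Z (sopt d) u v <= 3.
  move=> v nvu; have nuv : u != v by rewrite eq_sym.
  have /andP [c nu] := sopt_prop d u.
  move/forallP: c => /(_ v); rewrite nvu /= => cv.
  have [p [gp pl]] : exists p, greedy_path d (sopt d) u v p /\ (path_length d u p <= 3)%N.
    apply: (path_ex Hd) => //.
    case/orP: cv => [->|/existsP [w /andP [/andP [wi /eqP e1] /eqP e2]]]; first by left.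
    by right; exists w.
  have := stretch_up Hd Z nuv gp pl; exact.
have cge0 : 0 <= cost d Z alpha (sopt d) u.
  apply: addr_ge0; first by apply: sumr_ge0 => v _; apply: stretch_ge0.
  apply: mulr_ge0; [lra | exact: ler0n].
have c'ge0 : 0 <= cost d Z alpha (update (sopt d) u S') u.
  apply: addr_ge0; first by apply: sumr_ge0 => v _; apply: stretch_ge0.
  apply: mulr_ge0; [lra | exact: ler0n].
have hbpos : 0 < beta by lra.
rewrite ler_pdivrMr //.
have upd_u : update (sopt d) u S' u = S' by rewrite /update eqxx.
case: (boolP (coverb d u S')) => cS.
  have le6 : cost d Z alpha (sopt d) u <= 6 * cost d Z alpha (update (sopt d) u S') u.
    rewrite /cost mulrDr; apply: lerD.
      rewrite mulr_sumr; apply: ler_sum => v nvu.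
      have nuv : u != v by rewrite eq_sym.
      move/forallP: cS => /(_ v); rewrite nvu /= => cv.
      have [p [gp _]] : exists p, greedy_path d (update (sopt d) u S') u v p /\ (path_length d u p <= 3)%N.
        apply: (path_ex Hd) => //.
        - by move=> w nwu x e; rewrite /update (negbTE nwu); exact: (sopt_N1 Hd e).
        - by rewrite upd_u.
        rewrite upd_u.
        case/orP: cv => [->|/existsP [w /andP [/andP [wi /eqP e1] /eqP e2]]]; first by left.
        by right; exists w.
      have := stretch_low Hd Z nuv gp; have := up v nvu; lra.
    rewrite upd_u.
    have hc : (#|sopt d u|%:R : R) <= #|S'|%:R by rewrite ler_nat; apply: sopt_min.
    have : (0 : R) <= #|sopt d u|%:R by apply: ler0n.
    nra.
  nra.
rewrite negb_forall in cS; case/existsP: cS => v.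
rewrite negb_imply => /andP [nvu ncv].
have nuv : u != v by rewrite eq_sym.
have st : stretch d Z (update (sopt d) u S') u v = Z.
  rewrite /stretch; case: pselect => [H|//]; exfalso; case: H => k /asboolP [p [gp _]].
  case: (greedy_cover Hd nuv gp); rewrite upd_u.
    by move=> vi; rewrite vi in ncv.
  move=> [w [wi [e1 e2]]]; move/negP: ncv; apply; apply/orP; right; apply/existsP; exists w.
  by rewrite wi e1 e2.
have c'Z : Z <= cost d Z alpha (update (sopt d) u S') u.
  rewrite /cost (bigD1 v) //= st -addrA lerDl; apply: addr_ge0.
    by apply: sumr_ge0 => x _; apply: stretch_ge0.
  apply: mulr_ge0; [lra | exact: ler0n].
have cZ : cost d Z alpha (sopt d) u <= Z.
  apply: le_trans HZ; rewrite /cost; apply: lerD.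
    have : \sum_(v | v != u) stretch d Z (sopt d) u v <= \sum_(v : T) (3 : R).
      rewrite big_mkcond; apply: ler_sum => x _; case: ifP => h; first exact: up.
      lra.
    by rewrite sumr_const.
  apply: ler_wpM2l; first lra.
  by rewrite ler_nat max_card.
have : cost d Z alpha (update (sopt d) u S') u <= cost d Z alpha (update (sopt d) u S') u * beta.
  rewrite -[X in X <= _]mulr1; apply: ler_wpM2l => //; lra.
lra.
Qed.
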